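(* Let $M=(X,rk)$ be a matroid on a finite ground set $X$ with rank $r=rk(X)$, and let $i$ be a nonnegative integer. Then $d_1(M)>r-i$ if and only if \[[x^i]T_M(x,1)=\binom{|X|-i-1}{r-i}.\]
   Context: $T_M(x,y)=\sum_{A\subseteq X}(x-1)^{r-rk(A)}(y-1)^{|A|-rk(A)}$ is the Tutte polynomial of $M$, and $[x^i]f(x)$ denotes the coefficient of $x^i$. A circuit of $M$ is a set $C\subseteq X$ with $rk(C\setminus\{e\})=|C|-1=rk(C)$ for all $e\in C$. $d_1(M)$ is the minimum size of a circuit of $M$. *)

(* Defs.v *)
From mathcomp Require Import all_boot all_order all_algebra.
Set Implicit Arguments. Unset Strict Implicit. Unset Printing Implicit Defensive.
Import GRing.Theory Num.Theory.
Local Open Scope ring_scope.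

Definition is_matroid_rank (X : finType) (rk : {set X} -> nat) : Prop :=
  [/\ forall A : {set X}, (rk A <= #|A|)%N,
      forall A B : {set X}, A \subset B -> (rk A <= rk B)%N &
      forall A B : {set X}, (rk (A :|: B) + rk (A :&: B) <= rk A + rk B)%N].

Definition mrank (X : finType) (rk : {set X} -> nat) : nat := rk [set: X].

(* Tutte polynomial T_M(x,y) = sum_A (x-1)^(r - rk A) (y-1)^(|A| - rk A),
   as an element of Z[x][y]: outer variable y, inner variable x. *)
Definition tutte (X : finType) (rk : {set X} -> nat) : {poly {poly int}} :=
  \sum_(A : {set X})
     (((('X - 1) ^+ (mrank rk - rk A)%N)%:P) * ('X - 1) ^+ (#|A| - rk A)%N).

Definition tutte_x1 (X : finType) (rk : {set X} -> nat) : {poly int} :=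
  (tutte rk).[1].

(* Circuit: rk(C \ {e}) = |C| - 1 = rk(C) for all e in C (integer arithmetic,
   so the empty set is not a circuit). *)
Definition is_circuit (X : finType) (rk : {set X} -> nat) (C : {set X}) : bool :=
  (#|C|%:Z - 1 == (rk C)%:Z) &&
  [forall e in C, (rk (C :\ e))%:Z == #|C|%:Z - 1].

(* d_1(M) = minimum size of a circuit; if M has no circuit we use the value
   |X| + 1, which plays the role of +infinity (every r - i is <= |X|). *)
Definition d1 (X : finType) (rk : {set X} -> nat) : nat :=
  \big[minn/#|X|.+1]_(C : {set X} | is_circuit rk C) #|C|.

(* Main.v *)
Require Import Defs.
From mathcomp Require Import all_boot all_order all_algebra.
From mathcomp Require Import zify.
Import GRing.Theory Num.Theory.
Local Open Scope ring_scope.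

Lemma rk_card {X : finType} {rk : {set X} -> nat} (H : is_matroid_rank rk) (A : {set X}) :
  (rk A <= #|A|)%N.
Proof. by case: H. Qed.
Lemma rk_mono {X : finType} {rk : {set X} -> nat} (H : is_matroid_rank rk) (A B : {set X}) :
  A \subset B -> (rk A <= rk B)%N.
Proof. by case: H => _ h _; apply: h. Qed.
Lemma rk_submod {X : finType} {rk : {set X} -> nat} (H : is_matroid_rank rk) (A B : {set X}) :
  (rk (A :|: B) + rk (A :&: B) <= rk A + rk B)%N.
Proof. by case: H. Qed.
Lemma rk0 {X : finType} {rk : {set X} -> nat} (H : is_matroid_rank rk) :
  rk set0 = 0%N.
Proof. by apply/eqP; rewrite -leqn0 -(cards0 X) rk_card. Qed.

Lemma indep_sub {X : finType} {rk : {set X} -> nat} (H : is_matroid_rank rk) (A B : {set X}) :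
  rk B = #|B| -> A \subset B -> rk A = #|A|.
Proof.
move=> hB sAB.
have h := rk_submod H A (B :\: A).
have e1 : A :|: (B :\: A) = B by rewrite setDE setUIr setUCr setIT; apply/setUidPr.
have e2 : A :&: (B :\: A) = set0 by rewrite setDE setICA setICr setI0.
rewrite e1 e2 rk0 // addn0 in h.
have h2 := rk_card H (B :\: A).
have h3 : #|B :\: A| = (#|B| - #|A|)%N by rewrite cardsD (setIidPr sAB).
have h4 := rk_card H A.
have h5 : (#|A| <= #|B|)%N by apply: subset_leq_card.
lia.
Qed.

Lemma sum_split (X : finType) (F : {set X} -> {poly int}) (E : {set X}) (e : X) : e \in E ->
  \sum_(A : {set X} | A \subset E) F A =
  \sum_(A : {set X} | A \subset E :\ e) F A + \sum_(A : {set X} | A \subset E :\ e) F (e |: A).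
Proof.
move=> eE; rewrite (bigID (fun A : {set X} => e \in A)) /= addrC; congr (_ + _).
  by apply: eq_bigl => A; rewrite subsetD1.
rewrite (reindex_onto (fun A : {set X} => e |: A) (fun A : {set X} => A :\ e)) /=; last first.
  by move=> A /andP[_ eA]; apply: setD1K.
apply: eq_bigl => A; rewrite subsetD1 setU11 andbT subUset sub1set eE /=.
case: (boolP (e \in A)) => eA /=; last by rewrite setU1K // eqxx andbT.
case: eqP => h; last by rewrite andbF.
by move: eA; rewrite -h setD11.
Qed.

Definition P {X : finType} (rk : {set X} -> nat) (E : {set X}) : {poly int} :=
  \sum_(A : {set X} | A \subset E)
     (if rk A == #|A| then ('X - 1) ^+ (rk E - #|A|) else 0).
Definition sind {X : finType} (rk : {set X} -> nat) (E : {set X}) (k : nat) :=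
  forall A : {set X}, A \subset E -> (#|A| <= k)%N -> rk A = #|A|.
Definition con {X : finType} (rk : {set X} -> nat) (e : X) :=
  fun A : {set X} => (rk (e |: A) - rk [set e])%N.

Lemma size_Xm1 m : size (('X - 1 : {poly int}) ^+ m) = m.+1.
Proof.
have mon : ('X - 1 : {poly int}) ^+ m \is monic by rewrite -polyC1 monic_exp // monicXsubC.
have := size_exp ('X - 1 : {poly int}) m; rewrite -polyC1 size_XsubC mul1n.
have : size (('X - (1%:P : {poly int})) ^+ m) != 0%N by rewrite size_poly_eq0 monic_neq0.
by move=> h2 h1; move: h1 h2; case: (size _) => [|s] //= ->.
Qed.

Lemma coef_Xm1_top m : (('X - 1 : {poly int}) ^+ m)`_m = 1.
Proof.
have mon : ('X - 1 : {poly int}) ^+ m \is monic by rewrite -polyC1 monic_exp // monicXsubC.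
by move/monicP: mon; rewrite /lead_coef size_Xm1.
Qed.

Lemma coef_Xm1_high m j : (m < j)%N -> (('X - 1 : {poly int}) ^+ m)`_j = 0.
Proof. by move=> h; apply: nth_default; rewrite size_Xm1. Qed.

Lemma indep_le {X : finType} {rk : {set X} -> nat} (H : is_matroid_rank rk) (A E : {set X}) :
  A \subset E -> rk A = #|A| -> (#|A| <= rk E)%N.
Proof. by move=> sAE <-; apply: rk_mono. Qed.

Lemma coef_top {X : finType} {rk : {set X} -> nat} (H : is_matroid_rank rk) (E : {set X}) :
  (P rk E)`_(rk E) = 1.
Proof.
rewrite /P coef_sum (bigD1 set0) ?sub0set //= rk0 // cards0 eqxx subn0 coef_Xm1_top.
rewrite big1 ?addr0 // => A /andP[sAE nA0].
case: eqP => hA; last by rewrite coef0.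
rewrite coef_Xm1_high //.
have := indep_le H A E sAE hA; have : (0 < #|A|)%N by rewrite card_gt0.
lia.
Qed.

Lemma coef_high {X : finType} {rk : {set X} -> nat} (H : is_matroid_rank rk) (E : {set X}) j :
  (rk E < j)%N -> (P rk E)`_j = 0.
Proof.
move=> hj; rewrite /P coef_sum big1 // => A sAE.
case: eqP => hA; last by rewrite coef0.
rewrite coef_Xm1_high //; lia.
Qed.

Lemma rk_U1 {X : finType} {rk : {set X} -> nat} (H : is_matroid_rank rk) (e : X) (A : {set X}) :
  (rk A <= rk (e |: A) <= rk A + rk [set e])%N.
Proof.
rewrite rk_mono ?subsetUr //=.
have := rk_submod H [set e] A; lia.
Qed.

Lemma rk_U1_ge {X : finType} {rk : {set X} -> nat} (H : is_matroid_rank rk) (e : X) (A : {set X}) :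
  (rk [set e] <= rk (e |: A))%N.
Proof. by rewrite rk_mono ?subsetUl. Qed.

Lemma rk_set1 {X : finType} {rk : {set X} -> nat} (H : is_matroid_rank rk) (e : X) :
  (rk [set e] <= 1)%N.
Proof. by have := rk_card H [set e]; rewrite cards1. Qed.

Lemma card_U1 {X : finType} {E A : {set X}} {e : X} : A \subset E :\ e -> #|e |: A| = #|A|.+1.
Proof.
move=> sAE; rewrite cardsU1.
have -> : e \notin A by apply/negP => /(subsetP sAE); rewrite !inE eqxx.
by [].
Qed.

Lemma coloop_ineq {X : finType} {rk : {set X} -> nat} (H : is_matroid_rank rk) {E A : {set X}} {e : X} :
  e \in E -> A \subset E :\ e -> (rk E + rk A <= rk (e |: A) + rk (E :\ e))%N.
Proof.
move=> eE sAE.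
have hA : forall x, x \in A -> (x != e) && (x \in E).
  by move=> x /(subsetP sAE); rewrite in_setD1.
have e1 : (e |: A) :|: (E :\ e) = E.
  apply/setP => x; rewrite !inE; case: (x =P e) => [->|ne] //=; rewrite ?eE ?orbT //.
  by case: (boolP (x \in A)) => //= /hA /andP[].
have e2 : (e |: A) :&: (E :\ e) = A.
  apply/setP => x; rewrite !inE; case: (x =P e) => [->|ne] //=.
    by case: (boolP (e \in A)) => // /hA; rewrite eqxx.
  by case: (boolP (x \in A)) => //= /hA /andP[].
by have := rk_submod H (e |: A) (E :\ e); rewrite e1 e2.
Qed.

Lemma con_mat {X : finType} {rk : {set X} -> nat} (H : is_matroid_rank rk) (e : X) :
  is_matroid_rank (con rk e).
Proof.
rewrite /con; split.
- move=> A; have := rk_card H (e |: A); have := rk_set1 H e; have := rk_U1_ge H e A.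
  have := rk_U1 H e A; have := rk_card H A; rewrite cardsU1.
  case: (e \in A) => /=; lia.
- move=> A B sAB; have : (rk (e |: A) <= rk (e |: B))%N by apply: (rk_mono H); apply/subsetP => x; rewrite !inE; case: (x == e) => //= /(subsetP sAB).
  lia.
- move=> A B.
  have e1 : e |: (A :|: B) = (e |: A) :|: (e |: B).
    by apply/setP => x; rewrite !inE; case: (x == e).
  have e2 : e |: (A :&: B) = (e |: A) :&: (e |: B).
    by apply/setP => x; rewrite !inE; case: (x == e).
  have := rk_submod H (e |: A) (e |: B); rewrite -e1 -e2.
  have := rk_U1_ge H e (A :&: B); have := rk_U1_ge H e (A :|: B).
  lia.
Qed.

Lemma E_split {X : finType} (E : {set X}) (e : X) : e \in E -> e |: (E :\ e) = E.
Proof. exact: setD1K. Qed.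

Definition term {X : finType} (rk : {set X} -> nat) (r : nat) (A : {set X}) : {poly int} :=
  if rk A == #|A| then ('X - 1) ^+ (r - #|A|) else 0.

Lemma P_split {X : finType} (rk : {set X} -> nat) (E : {set X}) (e : X) : e \in E ->
  P rk E = \sum_(A : {set X} | A \subset E :\ e) term rk (rk E) A
         + \sum_(A : {set X} | A \subset E :\ e) term rk (rk E) (e |: A).
Proof. by move=> eE; rewrite /P (@sum_split X (term rk (rk E)) E e eE). Qed.

Lemma P_term {X : finType} (rk : {set X} -> nat) (E : {set X}) :
  P rk E = \sum_(A : {set X} | A \subset E) term rk (rk E) A.
Proof. by []. Qed.

Lemma P_loop {X : finType} {rk : {set X} -> nat} (H : is_matroid_rank rk) (E : {set X}) (e : X) :
  e \in E -> rk [set e] = 0%N -> rk (E :\ e) = rk E /\ P rk E = P rk (E :\ e).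
Proof.
move=> eE he.
have hr : rk (E :\ e) = rk E.
  have := rk_U1 H e (E :\ e); rewrite E_split // he; lia.
split => //; rewrite (P_split rk _ _ eE) P_term hr.
rewrite [X in _ + X]big1 ?addr0 // => A sA.
rewrite /term (card_U1 sA); case: eqP => // h.
have := rk_U1 H e A; have := rk_card H A; lia.
Qed.

Lemma P_coloop {X : finType} {rk : {set X} -> nat} (H : is_matroid_rank rk) (E : {set X}) (e : X) :
  e \in E -> (rk (E :\ e) < rk E)%N ->
  rk (E :\ e) = (rk E).-1 /\ P rk E = 'X * P rk (E :\ e).
Proof.
move=> eE hlt.
have hr : rk (E :\ e) = (rk E).-1.
  have := rk_U1 H e (E :\ e); have := rk_set1 H e; rewrite E_split //; lia.
split => //; rewrite (P_split rk _ _ eE) P_term hr mulr_sumr -big_split /=.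
apply: eq_bigr => A sA.
have hc := coloop_ineq H eE sA.
have hu := rk_U1 H e A; have hs := rk_set1 H e; have hcA := rk_card H A.
rewrite /term (card_U1 sA).
case: eqP => hA.
  have -> : rk (e |: A) == #|A|.+1 by apply/eqP; lia.
  have hle : (#|A| <= rk (E :\ e))%N by rewrite -hA rk_mono // (subset_trans sA) // subsetDl.
  have -> : (rk E - #|A| = ((rk E).-1 - #|A|).+1)%N by lia.
  have -> : (rk E - #|A|.+1 = ((rk E).-1 - #|A|))%N by lia.
  rewrite exprS; set q := (_ ^+ _); rewrite mulrBl mul1r -addrA addNr addr0.
  by [].
have -> : (rk (e |: A) == #|A|.+1) = false by apply/negbTE/eqP; lia.
by rewrite addr0 mulr0.
Qed.

Lemma P_gen {X : finType} {rk : {set X} -> nat} (H : is_matroid_rank rk) (E : {set X}) (e : X) :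
  e \in E -> rk [set e] = 1%N -> rk (E :\ e) = rk E ->
  con rk e (E :\ e) = (rk E).-1 /\
  P rk E = P rk (E :\ e) + P (con rk e) (E :\ e).
Proof.
move=> eE he hr.
have hc : con rk e (E :\ e) = (rk E).-1 by rewrite /con E_split // he subn1.
split => //; rewrite (P_split rk _ _ eE) !P_term hr hc; congr (_ + _).
apply: eq_bigr => A sA.
have hu := rk_U1_ge H e A; rewrite he in hu.
rewrite /term /con (card_U1 sA) he.
have -> : (rk (e |: A) == #|A|.+1) = (rk (e |: A) - 1 == #|A|)%N by apply/eqP/eqP; lia.
by have -> : (rk E - #|A|.+1 = (rk E).-1 - #|A|)%N by lia.
Qed.

Lemma exists_sub_card {X : finType} (A : {set X}) (k : nat) :
  (k <= #|A|)%N -> exists S : {set X}, S \subset A /\ #|S| = k.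
Proof.
elim: k => [|k IH] hk; first by exists set0; rewrite sub0set cards0.
have [S [sSA cS]] := IH (ltnW hk).
have : (0 < #|A :\: S|)%N by rewrite cardsD (setIidPr sSA) cS; lia.
rewrite card_gt0 => /set0Pn [x]; rewrite inE => /andP[xS xA].
exists (x |: S); split; first by rewrite subUset sub1set xA sSA.
by rewrite cardsU1 xS cS.
Qed.

Lemma sind_coloop {X : finType} {rk : {set X} -> nat} (H : is_matroid_rank rk) (E : {set X}) (e : X) k :
  e \in E -> (rk (E :\ e) < rk E)%N -> (sind rk E k <-> sind rk (E :\ e) k).
Proof.
move=> eE hlt; split.
  by move=> h A sA hA; apply: h => //; apply: (subset_trans sA); apply: subsetDl.
move=> h A sA hA.
case: (boolP (e \in A)) => eA; last first.
  by apply: h => //; rewrite subsetD1 sA.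
have sA' : A :\ e \subset E :\ e by apply: setSD.
have cA' : #|A :\ e| = #|A|.-1 by rewrite (cardsD1 e A) eA.
have hA' : rk (A :\ e) = #|A :\ e| by apply: h => //; lia.
have hc := coloop_ineq H eE sA'.
rewrite E_split // in hc.
have := rk_card H A; have : (0 < #|A|)%N by rewrite card_gt0; apply/set0Pn; exists e.
lia.
Qed.

Lemma sind_gen {X : finType} {rk : {set X} -> nat} (H : is_matroid_rank rk) (E : {set X}) (e : X) k :
  e \in E -> rk [set e] = 1%N -> (0 < k)%N ->
  (sind rk E k <-> sind rk (E :\ e) k /\ sind (con rk e) (E :\ e) k.-1).
Proof.
move=> eE he hk; split.
  move=> h; split.
    by move=> A sA hA; apply: h => //; apply: (subset_trans sA); apply: subsetDl.
  move=> A sA hA; rewrite /con he.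
  have sE : e |: A \subset E.
    by rewrite subUset sub1set eE (subset_trans sA) ?subsetDl.
  have := h (e |: A) sE; rewrite (card_U1 sA) => h'.
  rewrite h'; lia.
move=> [h1 h2] A sA hA.
case: (boolP (e \in A)) => eA; last first.
  by apply: h1 => //; rewrite subsetD1 sA.
have sA' : A :\ e \subset E :\ e by apply: setSD.
have cA' : #|A :\ e| = #|A|.-1 by rewrite (cardsD1 e A) eA.
have := h2 (A :\ e) sA'; rewrite /con he E_split //.
have : (0 < #|A|)%N by rewrite card_gt0; apply/set0Pn; exists e.
have := rk_U1_ge H e (A :\ e); rewrite he E_split //.
lia.
Qed.

Lemma top_case {X : finType} {rk : {set X} -> nat} (H : is_matroid_rank rk) (E : {set X}) :
  exists d : nat, (P rk E)`_(rk E) = ('C(#|E| - rk E - 1, rk E - rk E))%:Z - d%:Z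
    /\ (d = 0%N <-> sind rk E (rk E - rk E)).
Proof.
exists 0%N; rewrite coef_top // subnn bin0 subr0; split => //; split => // _ A _.
by rewrite leqn0 cards_eq0 => /eqP ->; rewrite rk0 // cards0.
Qed.

Lemma main_lemma (X : finType) (n : nat) : forall (rk : {set X} -> nat) (E : {set X}),
  is_matroid_rank rk -> #|E| = n -> forall i, (i <= rk E)%N ->
  exists d : nat, (P rk E)`_i = ('C(n - i - 1, rk E - i))%:Z - d%:Z
    /\ (d = 0%N <-> sind rk E (rk E - i)).
Proof.
elim: n => [|n IH] rk E H hn i hi.
  have h0 : (rk E <= 0)%N by rewrite -hn rk_card.
  have -> : i = rk E by lia.
  by have := top_case H E; rewrite hn.
have [ir|ir] := eqVneq i (rk E); first by rewrite ir; have := top_case H E; rewrite hn.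
have {hi ir} hi : (i < rk E)%N by rewrite ltn_neqAle ir hi.
have [e eE] : exists e, e \in E by apply/set0Pn; rewrite -card_gt0 hn.
have cE' : #|E :\ e| = n by move: hn; rewrite (cardsD1 e E) eE; case.
have hrE' := rk_card H (E :\ e); rewrite cE' in hrE'.
have hrE := rk_card H E; rewrite hn in hrE.
have hs := rk_set1 H e.
have hu := rk_U1 H e (E :\ e); rewrite E_split // in hu.
have binE : forall a b, (a < b)%N -> (b <= n)%N ->
    'C(n.+1 - a - 1, b - a) = ('C(n - a - 1, b - a) + 'C(n - a - 1, (b - a).-1))%N.
  move=> a b hab hbn.
  have -> : (n.+1 - a - 1 = (n - a - 1).+1)%N by lia.
  have -> : (b - a = (b - a).-1.+1)%N by lia.
  by rewrite binS.
case: (ltnP 0 (rk [set e])) => he0; last first.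
  have he : rk [set e] = 0%N by lia.
  have [hr hP] := P_loop H _ _ eE he.
  have [d [hd hdi]] := IH rk (E :\ e) H cE' i (ltac:(rewrite hr; lia)).
  exists ('C(n - i - 1, (rk E - i).-1) + d)%N; rewrite hP hd hr.
  rewrite binE //; last by rewrite -hr.
  split; first by rewrite !PoszD; lia.
  have hpos : (0 < 'C(n - i - 1, (rk E - i).-1))%N by rewrite bin_gt0; lia.
  split; first by lia.
  move=> hsi; have := hsi [set e]; rewrite sub1set eE cards1 he => /(_ isT).
  by move=> /(_ (ltac:(lia))).
have he : rk [set e] = 1%N by lia.
case: (ltnP (rk (E :\ e)) (rk E)) => hlt.
  have [hr hP] := P_coloop H _ _ eE hlt.
  rewrite hP coefXM.
  case: eqP => [i0|i0].
    subst i; exists ('C(n.+1 - 0 - 1, rk E - 0)); split; first by rewrite subrr.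
    rewrite !subn0 subn1 /=; split.
      move=> /eqP; rewrite -leqn0 leqNgt bin_gt0 -ltnNge => hnr.
      have hEi : rk E = #|E| by lia.
      by move=> A sA _; exact: (indep_sub H A E hEi sA).
    move=> hsi; apply/eqP; rewrite -leqn0 leqNgt bin_gt0 -ltnNge ltnNge; apply/negP => hrn.
    have [S [sS cS]] := exists_sub_card (E :\ e) (rk E) (ltac:(lia)).
    have := hsi S (subset_trans sS (subsetDl _ _)) (ltac:(lia)).
    have := rk_mono H _ _ sS; lia.
  have [d [hd hdi]] := IH rk (E :\ e) H cE' i.-1 (ltac:(lia)).
  exists d; rewrite hd.
  have -> : (n - i.-1 - 1 = n.+1 - i - 1)%N by lia.
  have e1 : (rk (E :\ e) - i.-1 = rk E - i)%N by lia.
  rewrite e1 in hdi *.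
  split => //; apply: (iff_trans hdi); apply: iff_sym.
  exact: (sind_coloop H _ _ _ eE hlt).
have hr : rk (E :\ e) = rk E by lia.
have [hc hP] := P_gen H _ _ eE he hr.
have [d1 [hd1 hdi1]] := IH rk (E :\ e) H cE' i (ltac:(lia)).
have [d2 [hd2 hdi2]] := IH (con rk e) (E :\ e) (con_mat H e) cE' i (ltac:(lia)).
exists (d1 + d2)%N; rewrite hP coefD hd1 hd2 hr hc.
rewrite binE //; last by rewrite -hr.
have -> : ((rk E).-1 - i = (rk E - i).-1)%N by lia.
split; first by rewrite !PoszD; lia.
apply: iff_sym; apply: (iff_trans (sind_gen H E e (rk E - i) eE he (ltac:(lia)))).
move: hdi2; rewrite hc.
have -> : ((rk E).-1 - i = (rk E - i).-1)%N by lia.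
move=> hdi2; rewrite hr in hdi1; split.
  by move=> [s1 s2]; have := proj2 hdi1 s1; have := proj2 hdi2 s2; lia.
by move=> h0; split; [apply: (proj1 hdi1) | apply: (proj1 hdi2)]; lia.
Qed.

Lemma tutte_P {X : finType} {rk : {set X} -> nat} (H : is_matroid_rank rk) :
  tutte_x1 rk = P rk [set: X].
Proof.
rewrite /tutte_x1 /tutte horner_sum /P.
apply: eq_big => [A|A _]; first by rewrite subsetT.
rewrite hornerCM !hornerE subrr expr0n /mrank.
have hle := rk_card H A.
case: eqP => hA; last first.
  have -> : (rk A == #|A|) = false by apply/negbTE/eqP; lia.
  by rewrite mulr0.
have -> : #|A| = rk A by lia.
by rewrite eqxx mulr1.
Qed.

Lemma bigmin_le (I : finType) (Q : pred I) (F : I -> nat) idx (j : I) :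
  Q j -> (\big[minn/idx]_(i | Q i) F i <= F j)%N.
Proof.
move=> Qj.
elim: (index_enum I) (mem_index_enum j) => [|a r IH] //=.
rewrite in_cons big_cons => /orP[/eqP <-|jr].
  by rewrite Qj geq_minl.
by case: (Q a); rewrite ?geq_min IH ?orbT.
Qed.

Lemma d1_sind {X : finType} {rk : {set X} -> nat} (H : is_matroid_rank rk) (k : nat) :
  (k <= #|X|)%N -> ((k < d1 rk)%N <-> sind rk [set: X] k).
Proof.
move=> hk.
have circ_big : (k < d1 rk)%N <-> (forall C, is_circuit rk C -> (k < #|C|)%N).
  split.
    move=> hd C hC; apply: (leq_trans hd); exact: bigmin_le.
  move=> hC; rewrite /d1; apply: (big_ind (fun x => (k < x)%N)) => //.
  by move=> x y hx hy; rewrite leq_min hx hy.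
apply: (iff_trans circ_big); split.
  move=> hC A _ hA; apply/eqP; apply/negP => /negP hd.
  have hP : (A \subset A) && (rk A != #|A|) by rewrite subxx hd.
  case: (@arg_minnP _ A (fun B : {set X} => (B \subset A) && (rk B != #|B|)) (fun B : {set X} => #|B|) hP) => C /andP[sCA dC] minC.
  have hsub : forall x, x \in C -> rk (C :\ x) = #|C :\ x|.
    move=> x xC; apply/eqP; apply/negP => /negP hx.
    have := minC (C :\ x); rewrite hx (subset_trans (subsetDl _ _) sCA) => /(_ isT).
    by rewrite (cardsD1 x C) xC; lia.
  have C0 : C != set0 by apply: contraNneq dC => ->; rewrite rk0 // cards0.
  have [x xC] := set0Pn _ C0.
  have hcx : #|C :\ x| = #|C|.-1 by rewrite (cardsD1 x C) xC.
  have hrC := rk_card H C.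
  have hmx := rk_mono H _ _ (subsetDl C [set x]).
  have hx := hsub x xC.
  have hCc : is_circuit rk C.
    apply/andP; split.
      apply/eqP; have : (0 < #|C|)%N by rewrite card_gt0.
      move: dC => /eqP dC; lia.
    apply/forall_inP => y yC; apply/eqP; rewrite hsub // (cardsD1 y C) yC.
    have : (0 < #|C|)%N by rewrite card_gt0.
    move: dC => /eqP dC; lia.
  have := hC C hCc; have := subset_leq_card sCA; lia.
move=> hs C /andP[/eqP hc _]; rewrite ltnNge; apply/negP => hCk.
have := hs C (subsetT C) hCk; lia.
Qed.

Theorem theorem3p5 (X : finType) (rk : {set X} -> nat)
  (HM : is_matroid_rank rk) (i : nat) :
  ((mrank rk)%:Z - i%:Z < (d1 rk)%:Z)
  <-> (tutte_x1 rk)`_i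
      = (if (i <= mrank rk)%N then ('C(#|X| - i - 1, mrank rk - i))%:Z else 0).
Proof.
rewrite tutte_P // /mrank.
have hrX : (rk [set: X] <= #|X|)%N by rewrite -cardsT rk_card.
case: leqP => hi; last first.
  rewrite coef_high //; split => // _; lia.
have [d [hd hdi]] := main_lemma X _ rk [set: X] HM (erefl _) i hi.
rewrite hd cardsT.
have e1 : ((rk [set: X])%:Z - i%:Z < (d1 rk)%:Z) <-> (rk [set: X] - i < d1 rk)%N.
  by split; lia.
apply: (iff_trans e1); apply: (iff_trans (d1_sind HM (rk [set: X] - i) (ltac:(lia)))).
apply: iff_sym; apply: (iff_trans _ hdi); split; lia.
Qed.
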